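(* There is an absolute constant $C>0$ such that for every integer $k\ge 2$, all real $x \ge 1$ and all real $y$ with $1 \le y \le x$, \[ \#\{\, n \text{ $k$-full} : x < n \le x+y,\ p^+(n) \le y^{1/2}\,\} \le \#\{\, n \text{ squarefull} : x < n \le x+y,\ p^+(n) \le y^{1/2}\,\} \le C\, y^{11/12}. \]
   Context: A positive integer $n$ is $k$-full if every prime $p$ dividing $n$ satisfies $p^k \mid n$; squarefull means $2$-full. For an integer $n \ge 2$, $p^+(n)$ denotes the largest prime factor of $n$, with the convention $p^+(1)=1$. *)

(* Defs.v *)
From mathcomp Require Import all_boot.
From Stdlib Require Import Reals.

Definition kfull (k n : nat) : bool :=
  (0 < n) && all (fun p => p ^ k %| n) (primes n).

Definition squarefull (n : nat) : bool := kfull 2 n.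

(* largest prime factor, with p^+(1) = 1 : max_pdiv 1 = 1 in mathcomp *)
Definition pplus (n : nat) : nat := max_pdiv n.

(* #{ n : nat | P n and x < n <= x + y } ; N bounds the range, chosen as
   Z.to_nat (up (x+y)) which exceeds x + y. *)
Definition count_in (P : nat -> bool) (x y : R) : nat :=
  count (fun n => P n && Rlt_dec x (INR n) && Rle_dec (INR n) (x + y))
        (iota 0 (Z.to_nat (up (x + y)) + 1)).

(* Main.v *)
Require Import Defs.
From mathcomp Require Import all_boot.
From Stdlib Require Import Reals.
From Stdlib Require Import Lra Psatz.
From Stdlib Require ZArith.
From mathcomp Require Import zify.
From mathcomp Require Import all_boot.


Definition sfP (n : nat) := (0 < n) /\ forall p, prime p -> p %| n -> p ^ 2 %| n.

Lemma half_root n : sfP n -> exists a, (a ^ 2 %| n) /\ (n %| a ^ 3).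
Proof.
elim: n {-2}n (leqnn n) => [|N IH] n Hn [Hn0 Hsf].
  lia.
case: (ltngtP n 1) => Hn1; first lia.
2: by subst n; exists 1.
have pp := pdiv_prime Hn1; set p := pdiv n in pp.
have pd : p %| n := pdiv_dvd n.
case: (pfactor_coprime pp Hn0) => m Hcop Hnm.
set e := logn p n in Hnm.
have He2 : 2 <= e by rewrite -pfactor_dvdn //; apply: Hsf.
have Hm0 : 0 < m by move: Hn0; rewrite Hnm; case: m {Hnm Hcop}.
have Hpe : 4 <= p ^ e.
  have := prime_gt1 pp => Hp1.
  have : 2 ^ 2 <= p ^ e.
    apply: (@leq_trans (p ^ 2)); first by rewrite leq_exp2r.
    by rewrite leq_exp2l.
  by [].
have Hmn : m < n.
  rewrite Hnm. nia.
have Hsfm : sfP m.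
  split => // q qp qm.
  have qn : q %| n by rewrite Hnm dvdn_mulr.
  have := Hsf q qp qn; rewrite Hnm Gauss_dvdl //.
  apply: coprimeXl; apply: coprimeXr.
  rewrite prime_coprime //; apply/negP => qdp.
  move: qdp; rewrite dvdn_prime2 // => /eqP Hqp; subst q.
  by move: Hcop; rewrite prime_coprime // qm.
case: (IH m _ Hsfm) => [|a [Ha1 Ha2]]; first by lia.
exists (a * p ^ (e./2)); split.
  rewrite Hnm expnMn -expnM; apply: dvdn_mul => //.
  apply: dvdn_exp2l; lia.
rewrite Hnm expnMn -expnM; apply: dvdn_mul => //.
apply: dvdn_exp2l; lia.
Qed.

Lemma greedy T Q a : 0 < T -> 0 < Q -> (forall p, prime p -> p %| a -> p <= Q) -> T <= a ->
  exists d, (d %| a) /\ T <= d <= T * Q.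
Proof.
move=> HT HQ0.
elim: a {-2}a (leqnn a) => [|N IH] a Ha Hp HTa; first by lia.
case: (leqP a (T * Q)) => HaQ; first by exists a; rewrite dvdnn HTa HaQ.
have Ha1 : 1 < a.
  case: (ltngtP a 1) => // Ha1; first lia.
  subst a. nia.
have pp := pdiv_prime Ha1; have pd := pdiv_dvd a.
have pQ := Hp _ pp pd.
have p1 := prime_gt1 pp.
set p := pdiv a in pp pd pQ p1.
have Haa : a = (a %/ p) * p by rewrite divnK.
have HT' : T <= a %/ p.
  have : T * p < a %/ p * p.
    rewrite -Haa. apply: leq_ltn_trans HaQ. by rewrite leq_mul2l pQ orbT.
  rewrite ltn_mul2r => /andP [_ ?]; lia.
have Hlt : a %/ p <= N.
  have : a %/ p < a by rewrite ltn_Pdiv //; lia.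
  lia.
case: (IH (a %/ p) Hlt _ HT') => [q qp qd|d [dd Hd]].
  apply: Hp => //. apply: dvdn_trans qd _. apply/dvdnP; exists p; by rewrite mulnC.
exists d; split => //. apply: dvdn_trans dd _. apply/dvdnP; exists p; by rewrite mulnC.
Qed.

Lemma key T Q n : 0 < T -> 0 < Q -> sfP n -> (forall p, prime p -> p %| n -> p <= Q) ->
  T * T * T <= n -> exists d, T <= d <= T * Q /\ d * d %| n.
Proof.
move=> HT HQ Hsf Hp Hn.
have [Hn0 _] := Hsf.
case: (@half_root n Hsf) => a [Ha2 Ha3].
have Ha0 : 0 < a.
  case: a Ha2 Ha3 => // + _. move=> /dvdnP [k Hk]. rewrite Hk in Hn0. by rewrite expnS mul0n muln0 in Hn0.
have Hle : n <= a ^ 3 by apply: dvdn_leq; rewrite ?expn_gt0 ?Ha0.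
have HTa : T <= a.
  case: (leqP T a) => // HaT.
  have : a ^ 3 < T ^ 3 by rewrite ltn_exp2r.
  rewrite !expnS expn0 !muln1. nia.
have Hpa : forall p, prime p -> p %| a -> p <= Q.
  move=> p pp pa; apply: Hp => //. apply: dvdn_trans Ha2. apply: dvdn_trans pa _.
  by rewrite expnS dvdn_mulr.
case: (@greedy T Q a HT HQ Hpa HTa) => d [dd Hd].
exists d; split => //. apply: dvdn_trans Ha2. rewrite expnS expn1. exact: dvdn_mul.
Qed.

Lemma count_union (P : pred nat) (R : nat -> pred nat) lo hi s :
  (forall n, n \in s -> P n -> exists d, lo <= d < hi /\ R d n) ->
  count P s <= \sum_(lo <= d < hi) count (R d) s.
Proof.
elim: s => [|n s IH] H; first by rewrite /= big1.
rewrite /= big_split /=. apply: leq_add; last first.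
  apply: IH => m ms Pm; apply: H => //; by rewrite inE ms orbT.
case Pn: (P n) => //.
case: (H n (mem_head _ _) Pn) => d [Hd Rd].
rewrite (bigD1_seq d) /=; last by rewrite iota_uniq.
  by rewrite Rd.
by rewrite mem_index_iota.
Qed.

Lemma count_mult m u N : 0 < m -> count (fun n => m %| n) (iota u N) <= N %/ m + 2.
Proof.
move=> Hm.
rewrite -size_filter.
have -> : N %/ m + 2 = size (map (fun j => j * m) (iota (u %/ m) (N %/ m + 2))).
  by rewrite size_map size_iota.
apply: uniq_leq_size; first by rewrite filter_uniq // iota_uniq.
move=> n; rewrite mem_filter mem_iota => /andP [mn /andP [H1 H2]].
have -> : n = n %/ m * m by rewrite divnK.
apply: map_f. rewrite mem_iota.
have h1 : u %/ m <= n %/ m by apply: leq_div2r.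
have h2 : n %/ m <= (u + N) %/ m by apply: leq_div2r; lia.
have h3 := leq_divDl m u N.
apply/andP; split => //. lia.
Qed.

Section RealPart.
Local Open Scope R_scope.

Lemma INR_addn (m n : nat) : INR ((m + n)%nat) = INR m + INR n.
Proof. exact: plus_INR. Qed.

Lemma INR_muln (m n : nat) : INR ((m * n)%nat) = INR m * INR n.
Proof. exact: mult_INR. Qed.

Lemma frac_le a b c d : 0 < b -> 0 < d -> a * d <= c * b -> a / b <= c / d.
Proof.
move=> Hb Hd H.
replace (a / b) with ((a * d) * / (b * d)) by (field; lra).
replace (c / d) with ((c * b) * / (b * d)) by (field; lra).
apply Rmult_le_compat_r => //. left; apply Rinv_0_lt_compat; nra.
Qed.

Lemma INR_div (N m : nat) : (0 < m)%nat -> INR (N %/ m) <= INR N / INR m.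
Proof.
move=> Hm.
have Hm' : 0 < INR m by apply lt_0_INR; apply/ltP.
have E : N = ((N %/ m * m + N %% m)%nat) by rewrite -divn_eq.
apply (Rmult_le_reg_r (INR m)) => //.
replace (INR N / INR m * INR m) with (INR N) by (field; lra).
rewrite {2}E INR_addn INR_muln. have := pos_INR (N %% m). lra.
Qed.

Lemma sum_bound N T k : (0 < T)%nat ->
  INR ((\sum_(T <= d < T + k) (N %/ (d * d) + 2))%nat) + 2 * INR N / INR (T + k)
    <= 2 * INR N / INR T + 2 * INR k.
Proof.
move=> HT.
elim: k => [|k IH].
  rewrite addn0 big_geq // /=. lra.
have E : (\sum_(T <= d < (T + k).+1) (N %/ (d * d) + 2) = \sum_(T <= d < T + k) (N %/ (d * d) + 2) + (N %/ ((T + k) * (T + k)) + 2))%nat.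
  by rewrite big_nat_recr //= leq_addr.
rewrite addnS E INR_addn INR_addn !S_INR.
set a := INR (T + k) in IH *.
have Ha : 1 <= a.
  rewrite /a. change 1 with (INR 1). apply le_INR. apply/leP. by rewrite addn_gt0 HT.
have HN := pos_INR N.
have Ht : INR (N %/ ((T + k) * (T + k))) <= INR N / (a * a).
  rewrite -INR_muln; apply: INR_div; rewrite muln_gt0 andbb addn_gt0 HT //.
have H1 : INR N / (a * a) <= 2 * INR N / (a * (a + 1)).
  apply frac_le; [nra|nra|].
  have : 0 <= INR N * (a * (a - 1)) by apply Rmult_le_pos; nra.
  nra.
have H2 : 2 * INR N / a = 2 * INR N / (a + 1) + 2 * INR N / (a * (a + 1)) by field; lra.
replace (INR 2) with 2 by (simpl; lra).
change (INR 0) with 0.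
lra.
Qed.

Lemma floor_ex r : 0 <= r -> exists N : nat, INR N <= r < INR N + 1.
Proof.
move=> Hr.
have [H1 H2] := archimed r.
have Hz : (0 < up r)%Z by apply lt_IZR; lra.
exists (Z.to_nat (up r - 1)).
rewrite INR_IZR_INZ Znat.Z2Nat.id; last lia.
rewrite minus_IZR. lra.
Qed.

Lemma reduce (P P' : pred nat) x y u M :
  (forall n, P n -> x < INR n -> INR n <= x + y -> P' n /\ (u <= n < u + M)%nat) ->
  (count_in P x y <= count P' (iota u M))%nat.
Proof.
move=> H.
rewrite /count_in -!size_filter.
apply: uniq_leq_size; first by rewrite filter_uniq // iota_uniq.
move=> n; rewrite mem_filter => /andP [Hn _].
move: Hn; case Pn: (P n) => //=; case: Rlt_dec => //= h1; case: Rle_dec => //= h2 _.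
have [a b] := H n Pn h1 h2. by rewrite mem_filter a mem_iota b.
Qed.

End RealPart.

Lemma powE m n : Nat.pow m n = expn m n.
Proof. elim: n => [|n IH] //=. by rewrite IH expnS. Qed.

Lemma kfull_sf k n : (2 <= k)%nat -> kfull k n -> squarefull n.
Proof.
move=> hk /andP [h0 /allP h]; rewrite /squarefull /kfull h0 andTb.
apply/allP => p pn. have := h p pn; rewrite !powE => hp. apply: dvdn_trans hp. by apply: dvdn_exp2l.
Qed.

Lemma sf_sfP n : squarefull n -> sfP n.
Proof.
move=> /andP [h0 /allP h]; split => // p pp pn.
rewrite -powE; apply: h. by rewrite mem_primes pp h0 pn.
Qed.

Lemma pplus_bound n Q p : (0 < n)%nat -> (pplus n <= Q)%nat -> prime p -> p %| n -> (p <= Q)%nat.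
Proof.
move=> h0 hQ pp pn. apply: leq_trans hQ. apply: max_pdiv_max.
by rewrite mem_primes pp h0 pn.
Qed.

From Stdlib Require Import Reals.

Theorem theorem3 :
  exists C : R, (0 < C)%R /\
    forall (k : nat) (x y : R), (2 <= k)%N -> (1 <= x)%R -> (1 <= y)%R -> (y <= x)%R ->
      (INR (count_in (fun n => kfull k n && Rle_dec (INR (pplus n)) (sqrt y)) x y)
         <= INR (count_in (fun n => squarefull n && Rle_dec (INR (pplus n)) (sqrt y)) x y))%R /\
      (INR (count_in (fun n => squarefull n && Rle_dec (INR (pplus n)) (sqrt y)) x y)
         <= C * Rpower y (11/12))%R.
Proof.
exists 12%R; split; first lra.
move=> k x y hk hx hy hyx; split.
  apply le_INR; apply/leP; apply: sub_count => n /=.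
  move=> /andP [/andP [/andP [h1 h2] h3] h4].
  by rewrite (@kfull_sf k n hk h1) h2 h3 h4.
set z := Rpower y (1/12).
have hz0 : (0 < z)%R by rewrite /z /Rpower; apply exp_pos.
have hz12 : (z ^ 12 = y)%R.
  rewrite -(Rpower_pow 12 z hz0) /z Rpower_mult.
  replace (1/12 * INR 12)%R with 1%R by (simpl; field).
  by apply Rpower_1; lra.
have hz1 : (1 <= z)%R.
  rewrite /z /Rpower. have := exp_ineq1_le (1/12 * ln y).
  have : (0 <= ln y)%R.
    case: (Rle_lt_or_eq_dec 1 y hy) => h; last by rewrite -h ln_1; lra.
    rewrite -ln_1; left; apply ln_increasing; lra.
  lra.
have h11 : (Rpower y (11/12) = z ^ 11)%R.
  rewrite -(Rpower_pow 11 z hz0) /z Rpower_mult.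
  by replace (1/12 * INR 11)%R with (11/12)%R by (simpl; field).
have hsq : (sqrt y = z ^ 6)%R.
  rewrite -hz12. replace (z ^ 12)%R with (z ^ 6 * z ^ 6)%R by ring.
  apply sqrt_square. apply pow_le; lra.
rewrite h11.
have [Xf hXf] := floor_ex x (ltac:(lra) : (0 <= x)%R).
have [Y hY] := floor_ex y (ltac:(lra) : (0 <= y)%R).
have [Q hQ] := floor_ex (sqrt y) (sqrt_pos y).
have [L hL] := floor_ex z (ltac:(lra) : (0 <= z)%R).
have hz6 : (1 <= z ^ 6)%R by apply pow_R1_Rle.
have hL1 : (0 < L)%N by case: L hL => [|L] //=; lra.
have hQ1 : (0 < Q)%N by case: Q hQ => [|Q] //=; lra.
set u := Xf.+1.
have hLu : (L * L * L <= u)%N.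
  have h3 : (INR (L * L * L) < INR u)%R.
    rewrite !INR_muln /u S_INR.
    have hz3 : (z ^ 3 <= z ^ 12)%R by apply Rle_pow; [lra | lia].
    have : (INR L ^ 3 <= z ^ 3)%R by apply pow_incr; split; [apply pos_INR | lra].
    replace (INR L * INR L * INR L)%R with (INR L ^ 3)%R by ring. lra.
  apply INR_lt in h3. apply/leP. lia.
set P' := fun n => squarefull n && (pplus n <= Q)%N.
have hred : (count_in (fun n => squarefull n && Rle_dec (INR (pplus n)) (sqrt y)) x y
              <= count P' (iota u Y.+1))%N.
  apply: reduce => n /andP [hs hp] h1 h2.
  move: hp; case: Rle_dec => //= hp _.
  have a1 : (pplus n < Q.+1)%N.
    apply/ltP; apply INR_lt; rewrite S_INR; lra.
  have a2 : (Xf < n)%N by apply/ltP; apply INR_lt; lra.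
  have a3 : (n < u + Y.+1)%N.
    apply/ltP; apply INR_lt. rewrite INR_addn /u !S_INR. lra.
  split; first by rewrite /P' hs.
  by rewrite a2 a3.
have hun : (count P' (iota u Y.+1)
              <= \sum_(L <= d < (L * Q).+1) count (fun n => d * d %| n) (iota u Y.+1))%N.
  apply: count_union => n; rewrite mem_iota => /andP [hn1 _] /andP [hs hp].
  have hsf := @sf_sfP n hs.
  have hn0 : (0 < n)%N by case: hsf.
  have [d [hd1 hd2]] := @key L Q n hL1 hQ1 hsf (fun p => @pplus_bound n Q p hn0 hp) (leq_trans hLu hn1).
  by exists d; split => //; lia.
have hmu : (\sum_(L <= d < (L * Q).+1) count (fun n => d * d %| n) (iota u Y.+1)
              <= \sum_(L <= d < (L * Q).+1) (Y.+1 %/ (d * d) + 2))%N.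
  rewrite big_nat_cond [X in (_ <= X)%N]big_nat_cond.
  apply: leq_sum => d /andP [/andP [hd _] _].
  apply: count_mult. rewrite muln_gt0 andbb. lia.
have hLk : (L + ((L * Q).+1 - L) = (L * Q).+1)%N.
  apply: subnKC. have : (1 <= Q)%N := hQ1. nia.
have hsb := sum_bound Y.+1 L ((L * Q).+1 - L) hL1.
rewrite hLk in hsb.
have hpos : (0 <= 2 * INR Y.+1 / INR (L * Q).+1)%R.
  apply Rmult_le_pos; [have := pos_INR Y.+1; lra | apply Rlt_le, Rinv_0_lt_compat, lt_0_INR; lia].
have hc := leq_trans hred (leq_trans hun hmu).
move/leP: hc => hc; apply le_INR in hc.
have hk' : (INR ((L * Q).+1 - L) <= INR L * INR Q + 1)%R.
  rewrite -INR_muln -S_INR. apply le_INR. apply/leP. lia.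
have hLQ : (INR L * INR Q <= z ^ 7)%R.
  replace (z ^ 7)%R with (z * z ^ 6)%R by ring.
  apply Rmult_le_compat; try apply pos_INR; lra.
have hw : (z ^ 7 <= z ^ 11)%R by apply Rle_pow; [lra | lia].
have hw1 : (1 <= z ^ 11)%R by apply pow_R1_Rle.
have hyzw : (y = z * z ^ 11)%R by rewrite -hz12; ring.
have hfr : (2 * INR Y.+1 / INR L <= 8 * z ^ 11 / 1)%R.
  apply frac_le; [apply lt_0_INR; lia | lra |].
  rewrite S_INR.
  have : (z <= 2 * INR L)%R.
    have : (1 <= INR L)%R by change 1%R with (INR 1); apply le_INR; apply/leP; lia.
    lra.
  nra.
lra.
Qed.
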